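(* Let $b\ge0$. Consider an instance with $m$ machines and $n$ jobs, an assignment $\{J_i\}_{i=1}^m$, and integers $\ell_1,\dots,\ell_m\in[m]$ such that for every $\ell\in[m]$ at most $\ell$ machines $i$ have $\ell_i\le\ell$. Suppose $$\sum_{i=1}^m\sum_{j\in J_i}\mathbb{E}[X''_{ij}]\le2\qquad\text{and}\qquad\sum_{j\in J_i}\beta_{\ell_i}(X'_{ij})\le b+1\ \ \text{for all } i\in[m].$$ Then the expected makespan $\mathbb{E}\big[\max_{i}\sum_{j\in J_i}X_{ij}\big]$ is at most $4b+10$.
   Context: Nonnegative random variables $X_{ij}$ (size of job $j$ on machine $i$), with $X_{ij}$ and $X_{i'j'}$ independent whenever $j\ne j'$. $X'_{ij}:=X_{ij}\mathbf{1}[X_{ij}\le1]$, $X''_{ij}:=X_{ij}\mathbf{1}[X_{ij}>1]$. Effective size: $\beta_k(X):=\frac{1}{\ln k}\ln\mathbb{E}[e^{(\ln k)X}]$ for integers $k\ge2$, $\beta_1(X):=\mathbb{E}[X]$. *)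

(* Defs.v *)
From HB Require Import structures.
From mathcomp Require Import all_boot all_order all_algebra.
From mathcomp Require Import all_classical all_reals all_analysis.
Set Implicit Arguments. Unset Strict Implicit. Unset Printing Implicit Defensive.
Import Order.TTheory GRing.Theory Num.Theory.
Local Open Scope classical_set_scope.
Local Open Scope ring_scope.

Section defs.
Context {d : measure_display} {T : measurableType d} {R : realType}.

Definition truncL (f : T -> R) : T -> R := fun x => if f x <= 1 then f x else 0.
Definition truncH (f : T -> R) : T -> R := fun x => if 1 < f x then f x else 0.

Definition expect (P : probability T R) (f : T -> R) : \bar R :=
  (\int[P]_x (f x)%:E)%E.

(* effective size beta_k(Y) = ln E[exp((ln k) Y)] / ln k for k >= 2, E[Y] for k = 1.
   (Used only for bounded Y, where these expectations are finite reals.) *)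
Definition beta (P : probability T R) (k : nat) (Y : T -> R) : R :=
  if (2 <= k)%N then ln (fine (expect P (fun x => expR (ln k%:R * Y x)))) / ln k%:R
  else fine (expect P Y).

(* Mutual independence of the job size vectors (X_{ij})_{i} across jobs j:
   product rule for all measurable rectangles. *)
Definition jobs_independent (m n : nat) (P : probability T R)
  (X : 'I_m -> 'I_n -> T -> R) : Prop :=
  forall A : 'I_n -> 'I_m -> set R, (forall j i, measurable (A j i)) ->
    fine (P [set x | forall j i, A j i (X i j x)]) =
    \prod_(j < n) fine (P [set x | forall i, A j i (X i j x)]).

End defs.

(* Main.v *)
Require Import Defs.
From HB Require Import structures.
From mathcomp Require Import all_boot all_order all_algebra.
From mathcomp Require Import all_classical all_reals all_analysis.
From mathcomp Require Import measurable_realfun ring lra zify.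
Import Order.TTheory GRing.Theory Num.Theory.
Local Open Scope classical_set_scope.
Local Open Scope ring_scope.


Lemma mset_of {d' : measure_display} {T' : measurableType d'} {R : realType}
  (A : set T') (h : T' -> R) : measurable_fun [set: T'] h ->
  (forall x, A x -> h x = 1) -> (forall x, ~ A x -> h x = 0) -> measurable A.
Proof.
move=> hf h1 h0.
have -> : A = [set: T'] `&` h @^-1` [set 1].
  apply/seteqP; split => x /=.
    by move=> Ax; split => //; exact: h1.
  move=> [_ hx]; case: (pselect (A x)) => // nA.
  by move: hx; rewrite h0 // => /esym/eqP; rewrite oner_eq0.
exact: hf measurableT _ (measurable_set1 _).
Qed.

Lemma prod_expR {R : realType} (I : Type) (s : seq I) (Q : pred I) (f : I -> R) :
  \prod_(j <- s | Q j) expR (f j) = expR (\sum_(j <- s | Q j) f j).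
Proof.
elim: s => [|a s ih]; first by rewrite !big_nil expR0.
by rewrite !big_cons; case: (Q a) => //; rewrite ih expRD.
Qed.

Definition ev {R : realType} (Nr : R) (z : nat) (y : R) : bool :=
  (z%:R <= Nr * y) && (Nr * y < z.+1%:R).

Lemma mev {d' : measure_display} {T' : measurableType d'} {R : realType}
  (Nr : R) (z : nat) (f : T' -> R) : measurable_fun [set: T'] f ->
  measurable_fun [set: T'] (fun t => if ev Nr z (f t) then (1:R) else 0).
Proof.
move=> hf.
have hb : measurable_fun [set: T'] (fun t => ev Nr z (f t)).
  apply: measurable_and.
    apply: measurable_fun_ler; first exact: measurable_cst.
    by apply: measurable_funM => //; exact: measurable_cst.
  apply: measurable_fun_ltr; last exact: measurable_cst.
  by apply: measurable_funM => //; exact: measurable_cst.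
exact: (measurable_fun_ifT hb (measurable_cst _) (measurable_cst _)).
Qed.

Lemma ev_uniq {R : realType} (Nr : R) z z' y : ev Nr z y -> ev Nr z' y -> z = z'.
Proof.
rewrite /ev => /andP[a1 a2] /andP[b1 b2].
have h1 : (z%:R < z'.+1%:R :> R) := le_lt_trans a1 b2.
have h2 : (z'%:R < z.+1%:R :> R) := le_lt_trans b1 a2.
rewrite ltr_nat in h1; rewrite ltr_nat in h2.
rewrite ltnS in h1; rewrite ltnS in h2.
by apply/eqP; rewrite eqn_leq h1 h2.
Qed.

Section E.
Context {d : measure_display} {T : measurableType d} {R : realType} (P : probability T R).
Local Notation mf f := (measurable_fun [set: T] f).

Lemma mfE (f : T -> R) : mf f -> measurable_fun [set: T] (fun x => (f x)%:E).
Proof. by move=> h; apply/measurable_EFinP. Qed.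

Lemma E_le (f g : T -> R) : mf f -> mf g -> (forall x, 0 <= f x) ->
  (forall x, f x <= g x) -> (expect P f <= expect P g)%E.
Proof.
move=> hf hg f0 fg.
apply: (@ge0_le_integral _ _ _ P _ measurableT (fun x => (f x)%:E) (fun x => (g x)%:E)).
- by move=> x _; rewrite lee_fin.
- exact: mfE.
- exact: mfE.
- by move=> x _; rewrite lee_fin.
Qed.

Lemma E_ge0 (f : T -> R) : (forall x, 0 <= f x) -> (0 <= expect P f)%E.
Proof. by move=> f0; apply: integral_ge0 => x _; rewrite lee_fin. Qed.

Lemma E_add (f g : T -> R) : mf f -> mf g -> (forall x, 0 <= f x) -> (forall x, 0 <= g x) ->
  expect P (fun x => f x + g x) = (expect P f + expect P g)%E.
Proof.
move=> hf hg f0 g0; rewrite /expect.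
under eq_integral => x _ do rewrite EFinD.
apply: ge0_integralD => //.
- by move=> x _; rewrite lee_fin.
- exact: mfE.
- by move=> x _; rewrite lee_fin.
- exact: mfE.
Qed.

Lemma E_cst (c : R) : expect P (fun _ => c) = c%:E.
Proof.
rewrite /expect integral_cst //; rewrite -[RHS]mule1; congr (_ * _)%E; exact: probability_setT.
Qed.

Lemma msumr (I : Type) (s : seq I) (Q : pred I) (h : I -> T -> R) :
  (forall i, mf (h i)) -> mf (fun x => \sum_(i <- s | Q i) h i x).
Proof.
move=> mh; elim: s => [|a s ih].
  rewrite (_ : (fun x => _) = cst 0); first exact: measurable_cst.
  by apply/funext => x; rewrite big_nil.
rewrite (_ : (fun x => _) = (fun x => if Q a then h a x + \sum_(i <- s | Q i) h i x
   else \sum_(i <- s | Q i) h i x)); last by apply/funext => x; rewrite big_cons.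
by case: (Q a) => //; exact: measurable_funD.
Qed.

Lemma E_sum (I : Type) (s : seq I) (Q : pred I) (h : I -> T -> R) :
  (forall i, mf (h i)) -> (forall i x, 0 <= h i x) ->
  expect P (fun x => \sum_(i <- s | Q i) h i x) = (\sum_(i <- s | Q i) expect P (h i))%E.
Proof.
move=> mh h0; elim: s => [|a s ih].
  rewrite (_ : (fun x => _) = fun _ => 0); first by rewrite E_cst big_nil.
  by apply/funext => x; rewrite big_nil.
rewrite (_ : (fun x => _) = (fun x => if Q a then h a x + \sum_(i <- s | Q i) h i x
   else \sum_(i <- s | Q i) h i x)); last by apply/funext => x; rewrite big_cons.
rewrite big_cons; case: (Q a) => //.
rewrite E_add ?ih //; first exact: msumr.
by move=> x; apply: sumr_ge0.
Qed.

Lemma E_scale (c : R) (f : T -> R) : 0 <= c -> mf f -> (forall x, 0 <= f x) ->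
  expect P (fun x => c * f x) = (c%:E * expect P f)%E.
Proof.
move=> c0 hf f0; rewrite /expect.
under eq_integral => x _ do rewrite EFinM.
apply: ge0_integralZl_EFin => //; first by move=> x _; rewrite lee_fin.
exact: mfE.
Qed.

Lemma E_set (A : set T) (h : T -> R) : mf h ->
  (forall x, A x -> h x = 1) -> (forall x, ~ A x -> h x = 0) -> expect P h = P A.
Proof.
move=> mh h1 h0; have mA := @mset_of _ _ _ A h mh h1 h0; rewrite /expect.
rewrite (_ : (fun x => (h x)%:E) = fun x => (\1_A x)%:E); last first.
  apply/funext => x; rewrite indicE; have [Ax|nAx] := pselect (A x).
    by rewrite h1 // mem_set.
  by rewrite h0 // memNset.
by rewrite integral_indic // setIT.
Qed.

Lemma E_fin (f : T -> R) (M : R) : mf f -> (forall x, 0 <= f x) -> (forall x, f x <= M) ->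
  expect P f = (fine (expect P f))%:E.
Proof.
move=> hf f0 fM; rewrite fineK // ge0_fin_numE; last exact: E_ge0.
have h := @E_le f (fun _ => M) hf (measurable_cst M) f0 fM.
rewrite E_cst in h.
by apply: (le_lt_trans h); rewrite ltry.
Qed.

Lemma P_fin (A : set T) : measurable A -> P A = (fine (P A))%:E.
Proof.
move=> mA; rewrite fineK // ge0_fin_numE //.
by apply: (le_lt_trans (probability_le1 P mA)); rewrite ltry.
Qed.

End E.


Section Core.
Context {d : measure_display} {T : measurableType d} {R : realType} (P : probability T R).
Variables (m n : nat) (X : 'I_m -> 'I_n -> T -> R).
Hypothesis hX : forall i j, measurable_fun setT (X i j).
Hypothesis X0 : forall i j x, 0 <= X i j x.
Hypothesis hind : jobs_independent P X.
Variables (i : 'I_m) (Jp : pred 'I_n) (k : nat).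
Hypothesis hk : (2 <= k)%N.

Let Y j := truncL (X i j).
Let Nr : R := (n.+1)%:R.
Let L : R := ln k%:R.
Let ind j (z : 'I_n.+2) x : R := if ev Nr z (Y j x) then 1 else 0.
Let code j x : 'I_n.+2 := inord (Num.truncn (Nr * Y j x)).

Lemma Y0 j x : 0 <= Y j x.
Proof. rewrite /Y /truncL; case: ifP => // _; exact: X0. Qed.

Lemma Y1 j x : Y j x <= 1.
Proof. by rewrite /Y /truncL; case: ifP => // _; exact: ler01. Qed.

Lemma mY j : measurable_fun setT (Y j).
Proof.
have hb : measurable_fun setT (fun x => X i j x <= 1).
  by apply: measurable_fun_ler => //; exact: measurable_cst.
rewrite /Y /truncL.
exact: (measurable_fun_ifT hb (hX i j) (measurable_cst _)).
Qed.

Lemma Nr_gt0 : 0 < Nr. Proof. by rewrite ltr0n. Qed.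
Lemma L_gt0 : 0 < L. Proof. by apply: ln_gt0; rewrite ltr1n. Qed.

Lemma ev_code j x : ev Nr (code j x) (Y j x).
Proof.
have h0 : 0 <= Nr * Y j x by rewrite mulr_ge0 ?ler0n ?Y0.
have hlt : (Num.truncn (Nr * Y j x) < n.+2)%N.
  rewrite (truncn_lt_nat _ h0).
  apply: (le_lt_trans (y := Nr)); last by rewrite ltr_nat.
  by rewrite -[leRHS]mulr1 ler_wpM2l ?ler0n ?Y1.
rewrite /code /ev inordK //; apply/andP; split.
  by rewrite -(truncn_ge_nat _ h0).
by rewrite -(truncn_lt_nat _ h0).
Qed.

Lemma ind_code j x : ind j (code j x) x = 1.
Proof. by rewrite /ind ev_code. Qed.

Lemma ind_ne j z x : z != code j x -> ind j z x = 0.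
Proof.
rewrite /ind; case: ifP => // he hz.
have /val_inj hzc := @ev_uniq _ _ _ _ _ he (ev_code j x).
by rewrite hzc eqxx in hz.
Qed.

Lemma ind_ge0 j z x : 0 <= ind j z x.
Proof. by rewrite /ind; case: ifP. Qed.

Lemma sum_unique (F : 'I_n.+2 -> R) j x :
  \sum_(z < n.+2) ind j z x * F z = F (code j x).
Proof.
rewrite (bigD1 (code j x)) //= ind_code mul1r big1 ?addr0 // => z hz.
by rewrite ind_ne // mul0r.
Qed.

Lemma mind j z : measurable_fun setT (ind j z).
Proof. rewrite /ind; exact: (mev Nr z _ (mY j)). Qed.

Definition Ev j z := [set x | ev Nr z (Y j x)].

Lemma E_ind j z : expect P (ind j z) = P (Ev j z).
Proof.
apply: E_set; first exact: mind.
  by move=> x /= h; rewrite /ind h.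
by move=> x /= h; rewrite /ind ifF //; apply/negbTE/negP.
Qed.

Lemma mEv j (z : 'I_n.+2) : measurable (Ev j z).
Proof.
apply: mset_of; first exact: (mind j z).
  by move=> x /= h; rewrite /ind h.
by move=> x /= h; rewrite /ind ifF //; apply/negbTE/negP.
Qed.

Definition Fz (z : {ffun 'I_n -> 'I_n.+2}) := [set x | forall j, ev Nr (z j) (Y j x)].

Lemma prod_ind1 (z : {ffun 'I_n -> 'I_n.+2}) x : Fz z x -> \prod_j ind j (z j) x = 1.
Proof. by move=> h; apply: big1 => j _; rewrite /ind h. Qed.

Lemma prod_ind0 (z : {ffun 'I_n -> 'I_n.+2}) x : ~ Fz z x -> \prod_j ind j (z j) x = 0.
Proof.
move=> h; have [j hj] := (existsNP _).2 h.
rewrite (bigD1 j) //= {1}/ind ifF ?mul0r //; apply/negbTE/negP; exact: hj.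
Qed.

Lemma mprod (z : {ffun 'I_n -> 'I_n.+2}) : measurable_fun setT (fun x => \prod_j ind j (z j) x).
Proof. by apply: measurable_prod => j _; exact: mind. Qed.

Lemma mFz (z : {ffun 'I_n -> 'I_n.+2}) : measurable (Fz z).
Proof.
apply: (@mset_of _ _ R _ (fun x => \prod_j ind j (z j) x)); first exact: mprod.
  exact: prod_ind1.
exact: prod_ind0.
Qed.

Lemma E_prod (z : {ffun 'I_n -> 'I_n.+2}) : expect P (fun x => \prod_j ind j (z j) x) = P (Fz z).
Proof. apply: E_set; [exact: mprod|exact: prod_ind1|exact: prod_ind0]. Qed.

Definition p j (z : 'I_n.+2) := fine (P (Ev j z)).

Lemma p_ge0 j (z : 'I_n.+2) : 0 <= p j z.
Proof. by apply: fine_ge0; exact: measure_ge0. Qed.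

Lemma PF (z : {ffun 'I_n -> 'I_n.+2}) : P (Fz z) = (\prod_j p j (z j))%:E.
Proof.
rewrite (P_fin P _ (mFz z)); congr EFin.
pose tl (y : R) := if y <= 1 then y else 0.
have mtl : measurable_fun setT tl.
  have hb : measurable_fun setT (fun y : R => y <= 1).
    by apply: measurable_fun_ler; [exact: measurable_id|exact: measurable_cst].
  rewrite /tl; exact: (measurable_fun_ifT hb (@measurable_id _ _ setT) (measurable_cst _)).
pose A := fun j (i' : 'I_m) => if i' == i then [set y : R | ev Nr (z j) (tl y)] else setT.
have mA : forall j i', measurable (A j i').
  move=> j i'; rewrite /A; case: (i' == i); last exact: measurableT.
  apply: (@mset_of _ _ R _ (fun y => if ev Nr (z j) (tl y) then 1 else 0)).
  - exact: (mev Nr (z j) _ mtl).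
  - by move=> y /= ->.
  - by move=> y /= hy; rewrite ifF //; apply/negbTE/negP.
have E1 : [set x | forall j i', A j i' (X i' j x)] = Fz z.
  apply/seteqP; split => x /= H.
    by move=> j; have := H j i; rewrite /A eqxx.
  move=> j i'; rewrite /A; case: eqP => [->|_] //; exact: H j.
have E2 j : [set x | forall i', A j i' (X i' j x)] = Ev j (z j).
  apply/seteqP; split => x /= H.
    by have := H i; rewrite /A eqxx.
  move=> i'; rewrite /A; case: eqP => [->|_] //.
have := hind _ mA; rewrite E1 => ->.
by apply: eq_bigr => j _; rewrite E2.
Qed.


Let pw (t : R) := expR (L * t).
Let e j := fine (expect P (fun x => expR (L * Y j x))).

Lemma mexpY j : measurable_fun setT (fun x => expR (L * Y j x)).
Proof.
have h : measurable_fun setT (fun x => L * Y j x).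
  by apply: measurable_funM; [exact: measurable_cst|exact: mY].
exact: (measurableT_comp (@measurable_expR R) h).
Qed.

Lemma expY_le j x : expR (L * Y j x) <= expR L.
Proof. by rewrite ler_expR -[leRHS]mulr1 ler_wpM2l ?(ltW L_gt0) ?Y1. Qed.

Lemma expY_ge1 j x : 1 <= expR (L * Y j x).
Proof.
apply: le_trans (expR_ge1Dx _); rewrite lerDl mulr_ge0 ?Y0 //; exact: ltW L_gt0.
Qed.

Lemma E_e j : expect P (fun x => expR (L * Y j x)) = (e j)%:E.
Proof. exact: (E_fin P _ _ (mexpY j) (fun x => expR_ge0 _) (expY_le j)). Qed.

Lemma e_ge1 j : 1 <= e j.
Proof.
have h := @E_le _ _ _ P (fun _ => 1) _ (measurable_cst _) (mexpY j) (fun _ => ler01) (expY_ge1 j).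
by rewrite E_cst E_e lee_fin in h.
Qed.

Lemma e_beta j : e j = expR (L * beta P k (Y j)).
Proof.
rewrite /beta hk /= -/L -/(e j) mulrC divfK; last exact: lt0r_neq0 L_gt0.
rewrite lnK // posrE; exact: lt_le_trans ltr01 (e_ge1 j).
Qed.

Lemma tail_bound (Bb c : R) : \sum_(j < n | Jp j) beta P k (Y j) <= Bb ->
  (expect P (fun x => (if c < \sum_(j < n | Jp j) Y j x then 1 else 0)%R) <= (pw (Bb + 1 - c))%:E)%E.
Proof.
move=> hB.
pose C (z : {ffun 'I_n -> 'I_n.+2}) := (\prod_(j < n | Jp j) pw ((z j).+1%:R / Nr)) * pw (- c).
pose w j (z : 'I_n.+2) := if Jp j then pw (z.+1%:R / Nr) else 1.
pose q j := if Jp j then pw (Nr^-1) * e j else 1.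
have pw_ge0 t : 0 <= pw t by exact: expR_ge0.
have C_ge0 z : 0 <= C z by rewrite mulr_ge0 // prodr_ge0.
have w_ge0 j z : 0 <= w j z by rewrite /w; case: ifP.
have S1 x : (if c < \sum_(j < n | Jp j) Y j x then 1 else 0) <=
    \sum_(z : {ffun 'I_n -> 'I_n.+2}) C z * \prod_j ind j (z j) x.
  rewrite (bigD1 [ffun j => code j x]) //=.
  rewrite (_ : \prod_j ind j ([ffun j => code j x] j) x = 1); last first.
    by apply: big1 => j _; rewrite ffunE ind_code.
  rewrite mulr1 -[X in X <= _]addr0; apply: lerD; last first.
    apply: sumr_ge0 => z _; rewrite mulr_ge0 // prodr_ge0 // => j _; exact: ind_ge0.
  rewrite /C /pw prod_expR -expRD.
  case: ifP => [hc|_]; last exact: expR_ge0.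
  apply: le_trans (expR_ge1Dx _); rewrite lerDl.
  rewrite -mulr_sumr -mulrDr mulr_ge0 //; first exact: ltW L_gt0.
  rewrite subr_ge0; apply: (le_trans (ltW hc)); apply: ler_sum => j _.
  rewrite ffunE ler_pdivlMr ?Nr_gt0 // mulrC.
  by have /andP[_ h2] := ev_code j x; exact: ltW.
have mS : measurable_fun setT (fun x => if c < \sum_(j < n | Jp j) Y j x then (1:R) else 0).
  have hb : measurable_fun setT (fun x => c < \sum_(j < n | Jp j) Y j x).
    apply: measurable_fun_ltr; first exact: measurable_cst.
    by apply: msumr => j; exact: mY.
  exact: (measurable_fun_ifT hb (measurable_cst _) (measurable_cst _)).
have mRs : measurable_fun setT (fun x => \sum_(z : {ffun 'I_n -> 'I_n.+2}) C z * \prod_j ind j (z j) x).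
  by apply: msumr => z; exact: (measurable_funM (measurable_cst (C z)) (mprod z)).
have S0 x : 0 <= (if c < \sum_(j < n | Jp j) Y j x then (1:R) else 0) by case: ifP.
have h1 := @E_le _ _ _ P _ _ mS mRs S0 S1.
have h2 : expect P (fun x => \sum_(z : {ffun 'I_n -> 'I_n.+2}) C z * \prod_j ind j (z j) x) =
   ((pw (- c)) * \prod_j \sum_(z' < n.+2) p j z' * w j z')%:E.
  rewrite E_sum; last 2 first.
  - by move=> z; exact: (measurable_funM (measurable_cst (C z)) (mprod z)).
  - by move=> z x; rewrite mulr_ge0 // prodr_ge0 // => j _; exact: ind_ge0.
  rewrite (eq_bigr (fun z => ((C z * \prod_j p j (z j))%:E))); last first.
    move=> z _; rewrite E_scale //; last 2 first.
    - exact: mprod.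
    - by move=> x; rewrite prodr_ge0 // => j _; exact: ind_ge0.
    by rewrite E_prod PF EFinM.
  rewrite sumEFin; congr EFin.
  rewrite bigA_distr_bigA mulr_sumr; apply: eq_bigr => z _.
  rewrite /C big_split /= [\prod_(j < n | Jp j) _]big_mkcond /w /=.
  ring.
have h4 j : \sum_(z' < n.+2) p j z' * w j z' <= q j.
  rewrite -lee_fin -sumEFin.
  rewrite (eq_bigr (fun z' => expect P (fun x => w j z' * ind j z' x))); last first.
    move=> z' _; rewrite E_scale ?E_ind //; last 2 first.
    - exact: mind.
    - by move=> x; exact: ind_ge0.
    by rewrite (P_fin P _ (mEv j z')) -EFinM mulrC.
  rewrite -E_sum; last 2 first.
  - by move=> z'; exact: (measurable_funM (measurable_cst _) (mind j z')).
  - by move=> z' x; rewrite mulr_ge0 // ind_ge0.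
  have mq : measurable_fun setT (fun x => if Jp j then pw (Nr^-1) * expR (L * Y j x) else 1).
    case: (Jp j); last exact: measurable_cst.
    exact: (measurable_funM (measurable_cst _) (mexpY j)).
  have mL : measurable_fun setT (fun x => \sum_(z' < n.+2) w j z' * ind j z' x).
    by apply: msumr => z'; exact: (measurable_funM (measurable_cst _) (mind j z')).
  have L0 x : 0 <= \sum_(z' < n.+2) w j z' * ind j z' x.
    by apply: sumr_ge0 => z' _; rewrite mulr_ge0 // ind_ge0.
  have Lle x : \sum_(z' < n.+2) w j z' * ind j z' x <=
      (if Jp j then pw (Nr^-1) * expR (L * Y j x) else 1).
  rewrite (eq_bigr (fun z' => ind j z' x * w j z')); last by move=> z' _; rewrite mulrC.
  rewrite sum_unique /w; case: (Jp j) => //.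
  rewrite /pw -expRD ler_expR -mulrDr ler_wpM2l ?(ltW L_gt0) //.
  have -> : (code j x).+1%:R / Nr = (code j x)%:R / Nr + Nr^-1 by rewrite -natr1 mulrDl mul1r.
  rewrite addrC lerD2l ler_pdivrMr ?Nr_gt0 // mulrC.
    by have /andP[h _] := ev_code j x.
  apply: (le_trans (@E_le _ _ _ P _ _ mL mq L0 Lle)).
  rewrite /q; case: (Jp j); last by rewrite E_cst.
  rewrite E_scale; [by rewrite E_e|exact: expR_ge0|exact: mexpY|by move=> x; exact: expR_ge0].
have h5 : \prod_j q j <= pw 1 * pw Bb.
  rewrite /q -big_mkcond big_split /=.
  apply: ler_pM.
  - by apply: prodr_ge0 => j _.
  - by apply: prodr_ge0 => j _; exact: le_trans ler01 (e_ge1 j).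
  - rewrite /pw prod_expR ler_expR -mulr_sumr ler_wpM2l ?(ltW L_gt0) //.
    apply: (@le_trans _ _ (\sum_(j < n) Nr^-1)).
      rewrite [X in X <= _]big_mkcond; apply: ler_sum => j _; case: ifP => // _.
      by rewrite invr_ge0 ler0n.
    rewrite sumr_const card_ord -mulr_natr mulrC ler_pdivrMr ?Nr_gt0 // mul1r ler_nat.
    exact: leqnSn.
  - under eq_bigr => j _ do rewrite e_beta.
    by rewrite prod_expR /pw ler_expR -mulr_sumr ler_wpM2l ?(ltW L_gt0).
apply: (le_trans h1); rewrite h2 lee_fin.
apply: le_trans (_ : pw (- c) * (pw 1 * pw Bb) <= _).
  rewrite ler_wpM2l //; apply: le_trans h5; apply: ler_prod => j _.
  by rewrite h4 andbT; apply: sumr_ge0 => z _; rewrite mulr_ge0 // p_ge0.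
rewrite le_eqVlt; apply/orP; left; apply/eqP; rewrite /pw -!expRD; congr expR; ring.
Qed.

End Core.


Lemma expr_mono {R : realType} (x y : R) t : 0 <= x -> x <= y -> x ^+ t <= y ^+ t.
Proof.
move=> x0 xy; elim: t => [|t ih]; first by rewrite !expr0.
by rewrite !exprS ler_pM // exprn_ge0.
Qed.

Lemma geo_eq {R : realType} (N : nat) :
  \sum_(0 <= t < N) (2^-1 : R) ^+ t = 2 - 2 * (2^-1) ^+ N.
Proof.
elim: N => [|N ih]; first by rewrite big_geq // expr0 mulr1 subrr.
rewrite big_nat_recr //= ih exprS; field; done.
Qed.

Lemma geo_le {R : realType} (N : nat) : \sum_(0 <= t < N) (2^-1 : R) ^+ t <= 2.
Proof.
rewrite geo_eq; have h : 0 <= 2 * (2^-1 : R) ^+ N.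
  by rewrite mulr_ge0 // exprn_ge0 // invr_ge0.
lra.
Qed.

Lemma h_bound {R : realType} (x : R) : 2 <= x -> (x^-1) ^+ 3 <= 3 / (x * (x + 1) * (x + 2)).
Proof.
move=> hx.
have x0 : 0 < x by apply: lt_le_trans hx; rewrite ltr0n.
have D0 : 0 < x * (x + 1) * (x + 2) by rewrite !mulr_gt0 // ?addr_gt0.
rewrite ler_pdivlMr // exprVn mulrC ler_pdivrMr ?exprn_gt0 //.
rewrite -subr_ge0.
have -> : 3 * x ^+ 3 - x * (x + 1) * (x + 2) = x * ((2 * x + 1) * (x - 2)) by ring.
by rewrite mulr_ge0 ?(ltW x0) // mulr_ge0 ?subr_ge0 // addr_ge0 // mulr_ge0 // ltW.
Qed.

Lemma tele_eq {R : realType} (M : nat) :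
  \sum_(2 <= l < M.+2) (3 / (l%:R * (l%:R + 1) * (l%:R + 2)) * l%:R : R) =
  1 - 3 / (M%:R + 3).
Proof.
elim: M => [|M ih].
  by rewrite big_geq // add0r divff ?subrr // pnatr_eq0.
rewrite big_nat_recr //= ih.
have hM : 0 <= (M%:R : R) := ler0n _ _.
field; apply/and3P; split; apply: lt0r_neq0; lra.
Qed.

Lemma tele_le {R : realType} (M : nat) :
  \sum_(2 <= l < M) (3 / (l%:R * (l%:R + 1) * (l%:R + 2)) * l%:R : R) <= 1.
Proof.
case: M => [|[|M]]; try by rewrite big_geq.
rewrite tele_eq; have : 0 <= 3 / (M%:R + 3 : R).
  by rewrite divr_ge0 // addr_ge0.
lra.
Qed.

Lemma abel {R : realType} (m : nat) (ell : 'I_m -> nat) :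
  (forall i, (ell i <= m)%N) ->
  (forall l : nat, (1 <= l <= m)%N -> (#|[pred i : 'I_m | (ell i <= l)%N]| <= l)%N) ->
  \sum_(i < m | (2 <= ell i)%N) (((ell i)%:R : R)^-1) ^+ 3 <= 1.
Proof.
move=> hle hcard.
pose h (l : nat) : R := 3 / (l%:R * (l%:R + 1) * (l%:R + 2)).
have h0 l : 0 <= h l by rewrite /h divr_ge0 // !mulr_ge0 // addr_ge0.
apply: (@le_trans _ _ (\sum_(i < m | (2 <= ell i)%N) h (ell i))).
  by apply: ler_sum => i hi; apply: h_bound; rewrite (ler_nat R 2).
apply: (@le_trans _ _ (\sum_(i < m | (2 <= ell i)%N)
    \sum_(2 <= l < m.+1) (if (ell i <= l)%N then h l else 0))).
  apply: ler_sum => i hi.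
  rewrite (big_cat_nat _ (n := ell i)) //=; last by rewrite ltnW // ltnS hle.
  rewrite [\sum_(ell i <= l < m.+1) _]big_ltn ?ltnS ?hle // leqnn /= addrCA lerDl addr_ge0 //.
    by apply: sumr_ge0 => l _; case: ifP.
  by apply: sumr_ge0 => l _; case: ifP.
rewrite exchange_big /=.
apply: (@le_trans _ _ (\sum_(2 <= l < m.+1) h l * l%:R)); last exact: tele_le.
apply: ler_sum_nat => l /andP[l2 lm].
apply: (@le_trans _ _ (\sum_(i < m) (if (ell i <= l)%N then h l else 0))).
  rewrite [X in X <= _]big_mkcond; apply: ler_sum => i _.
  case: (2 <= ell i)%N; first exact: lexx.
  by case: ifP.
rewrite -big_mkcond /=.
rewrite (_ : \sum_(i < m | (ell i <= l)%N) h l = h l *+ #|[pred i : 'I_m | (ell i <= l)%N]|); last first.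
  by rewrite -sumr_const; apply: eq_bigl => i; rewrite inE.
rewrite -[X in X <= _]mulr_natr; apply: ler_wpM2l => //; rewrite ler_nat; apply: hcard; lia.
Qed.

Lemma pw_bound {R : realType} (K b : R) (t : nat) : 2 <= K ->
  expR (ln K * (b + 1 + 1 - (b + 5 + t%:R))) <= (K^-1) ^+ 3 * (2^-1) ^+ t.
Proof.
move=> hK; have K0 : 0 < K by apply: lt_le_trans hK; rewrite ltr0n.
have -> : b + 1 + 1 - (b + 5 + t%:R) = - ((3 + t)%N%:R) by rewrite natrD; ring.
rewrite mulrN expRN mulrC expRM_natl lnK ?posrE // -exprVn exprD.
apply: ler_wpM2l; first by rewrite exprn_ge0 // invr_ge0 ltW.
apply: expr_mono; first by rewrite invr_ge0 ltW.
by rewrite lef_pV2 ?posrE // ltr0n.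
Qed.

Lemma count_le {R : realType} (N : nat) (c y : R) : y <= c + N%:R ->
  y <= c + \sum_(0 <= t < N) (if c + t%:R < y then 1 else 0).
Proof.
elim: N c => [|N ih] c h.
  by move: h; rewrite big_geq // mulr0n !addr0.
rewrite big_ltn // big_add1 /= mulr0n addr0.
rewrite (eq_bigr (fun t => if c + 1 + t%:R < y then 1 else 0)); last first.
  by move=> t _; rewrite -natr1 (addrC t%:R 1) addrA.
have h' : y <= c + 1 + N%:R by move: h; rewrite -natr1; lra.
have h2 := ih (c + 1) h'.
have s0 : 0 <= \sum_(0 <= t < N) (if c + 1 + t%:R < y then (1:R) else 0).
  by apply: sumr_ge0 => t _; case: ifP.
by case: (ltP c y) => hc /=; lra.
Qed.

Lemma mbigmax {d} {T : measurableType d} {R : realType} (I : Type) (s : seq I) (F : I -> T -> R) :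
  (forall i, measurable_fun setT (F i)) ->
  measurable_fun setT (fun x => \big[Num.max/0]_(i <- s) F i x).
Proof.
move=> mF; elim: s => [|a s ih].
  rewrite (_ : (fun x => _) = cst 0); first exact: measurable_cst.
  by apply/funext => x; rewrite big_nil.
rewrite (_ : (fun x => _) = (F a) \max (fun x => \big[Num.max/0]_(i <- s) F i x)).
  exact: measurable_maxr.
by apply/funext => x; rewrite big_cons.
Qed.


Theorem mainTheorem7 (d : measure_display) (T : measurableType d) (R : realType)
  (P : probability T R) (m n : nat) (X : 'I_m -> 'I_n -> T -> R)
  (a : 'I_n -> 'I_m) (ell : 'I_m -> nat) (b : R) :
  0 <= b ->
  (forall i j, measurable_fun setT (X i j)) ->
  (forall i j x, 0 <= X i j x) ->
  jobs_independent P X ->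
  (forall i, (1 <= ell i <= m)%N) ->
  (forall l : nat, (1 <= l <= m)%N -> (#|[pred i : 'I_m | (ell i <= l)%N]| <= l)%N) ->
  (\sum_(i < m) \sum_(j < n | a j == i) expect P (truncH (X i j)) <= 2%:E)%E ->
  (forall i : 'I_m, \sum_(j < n | a j == i) beta P (ell i) (truncL (X i j)) <= b + 1) ->
  (expect P (fun x => (\big[Num.max/0]_(i < m) \sum_(j < n | a j == i) X i j x)%R)
     <= (4 * b + 10)%R%:E)%E.
Proof.
move=> b0 hX X0 hind hell hcard hH hB.
pose S (i : 'I_m) x := \sum_(j < n | a j == i) truncL (X i j) x.
pose H (i : 'I_m) x := \sum_(j < n | a j == i) truncH (X i j) x.
pose c0 := b + 5.
pose ind (t : nat) (i : 'I_m) x : R := if c0 + t%:R < S i x then 1 else 0.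
pose A1 x := \sum_(i < m | (ell i <= 1)%N) S i x.
pose A3 x := \sum_(0 <= t < n.+1) \sum_(i < m | (2 <= ell i)%N) ind t i x.
pose A4 x := \sum_(i < m) H i x.
have mtL i j : measurable_fun setT (truncL (X i j)).
  have hb : measurable_fun setT (fun x => X i j x <= 1).
    by apply: measurable_fun_ler => //; exact: measurable_cst.
  rewrite /truncL; exact: (measurable_fun_ifT hb (hX i j) (measurable_cst _)).
have mtH i j : measurable_fun setT (truncH (X i j)).
  have hb : measurable_fun setT (fun x => 1 < X i j x).
    by apply: measurable_fun_ltr => //; exact: measurable_cst.
  rewrite /truncH; exact: (measurable_fun_ifT hb (hX i j) (measurable_cst _)).
have tL0 i j x : 0 <= truncL (X i j) x by rewrite /truncL; case: ifP.
have tL1 i j x : truncL (X i j) x <= 1 by rewrite /truncL; case: ifP.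
have tH0 i j x : 0 <= truncH (X i j) x by rewrite /truncH; case: ifP.
have mS i : measurable_fun setT (S i) by rewrite /S; apply: msumr.
have mH i : measurable_fun setT (H i) by rewrite /H; apply: msumr.
have S0 i x : 0 <= S i x by apply: sumr_ge0.
have H0 i x : 0 <= H i x by apply: sumr_ge0.
have c00 : 0 <= c0 by rewrite /c0 addr_ge0.
have mind t i : measurable_fun setT (ind t i).
  have hb : measurable_fun setT (fun x => c0 + t%:R < S i x).
    by apply: measurable_fun_ltr => //; exact: measurable_cst.
  rewrite /ind; exact: (measurable_fun_ifT hb (measurable_cst _) (measurable_cst _)).
have ind0 t i x : 0 <= ind t i x by rewrite /ind; case: ifP.
have mA1 : measurable_fun setT A1 by rewrite /A1; apply: msumr.
have mA3 : measurable_fun setT A3 by rewrite /A3; apply: msumr => t; apply: msumr.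
have mA4 : measurable_fun setT A4 by rewrite /A4; apply: msumr.
have A10 x : 0 <= A1 x by apply: sumr_ge0.
have A30 x : 0 <= A3 x by apply: sumr_ge0 => t _; apply: sumr_ge0.
have A40 x : 0 <= A4 x by apply: sumr_ge0.
pose G x := A1 x + (c0 + (A3 x + A4 x)).
have m34 : measurable_fun setT (fun x => A3 x + A4 x) by exact: measurable_funD.
have mc34 : measurable_fun setT (fun x => c0 + (A3 x + A4 x)).
  by apply: measurable_funD => //; exact: measurable_cst.
have mG : measurable_fun setT G by exact: measurable_funD.
have mW : measurable_fun setT (fun x => \big[Num.max/0]_(i < m) \sum_(j < n | a j == i) X i j x).
  by apply: mbigmax => i; apply: msumr.
have W0 x : 0 <= \big[Num.max/0]_(i < m) \sum_(j < n | a j == i) X i j x.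
  apply: (@big_ind R (fun y : R => 0 <= y)) => //; first by move=> u v u0 v0; rewrite le_max u0.
  by move=> i _; apply: sumr_ge0.
have hW x : \big[Num.max/0]_(i < m) \sum_(j < n | a j == i) X i j x <= G x.
  apply: bigmax_le; first by rewrite /G; have := A10 x; have := A30 x; have := A40 x; lra.
  move=> i _.
  have -> : \sum_(j < n | a j == i) X i j x = S i x + H i x.
    rewrite /S /H -big_split /=; apply: eq_bigr => j _.
    by rewrite /truncL /truncH; case: (leP (X i j x) 1) => _; rewrite ?addr0 ?add0r.
  have hHi : H i x <= A4 x.
    rewrite /A4 (bigD1 i) //= lerDl; exact: sumr_ge0.
  have hSi : S i x <= A1 x + (c0 + A3 x).
    case: (leqP (ell i) 1) => hl.
      have : S i x <= A1 x by rewrite /A1 (bigD1 i) //= lerDl; exact: sumr_ge0.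
      by have := A30 x; lra.
    have hSn : S i x <= c0 + n.+1%:R.
      have : S i x <= n%:R.
        apply: (@le_trans _ _ (\sum_(j < n) (1:R))); last by rewrite sumr_const card_ord.
        rewrite /S [X in X <= _]big_mkcond; apply: ler_sum => j _; case: ifP => _ //.
      by rewrite -natr1; lra.
    have h1 := @count_le R n.+1 c0 (S i x) hSn.
    have h2 : \sum_(0 <= t < n.+1) (if c0 + t%:R < S i x then (1:R) else 0) <= A3 x.
      rewrite /A3; apply: ler_sum => t _; rewrite (bigD1 i) //= -/(ind t i x) lerDl.
      by apply: sumr_ge0 => i' _.
    by have := A10 x; lra.
  by rewrite /G; lra.
have hE1 := @E_le _ _ _ P _ _ mW mG W0 hW.
apply: (le_trans hE1).
have eG : expect P G = (expect P A1 + (c0%:E + (expect P A3 + expect P A4)))%E.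
  rewrite /G (@E_add _ _ _ P A1 _ mA1 mc34 A10); last by move=> x; rewrite addr_ge0 // addr_ge0.
  rewrite (@E_add _ _ _ P (fun _ => c0) _ (measurable_cst _) m34 (fun _ => c00)); last first.
    by move=> x; rewrite addr_ge0.
  by rewrite E_cst (@E_add _ _ _ P A3 A4 mA3 mA4 A30 A40).
rewrite eG.
have hA1 : (expect P A1 <= (b + 1)%:E)%E.
  have eA1 : expect P A1 = (\sum_(i < m | (ell i <= 1)%N)
       \sum_(j < n | a j == i) beta P (ell i) (truncL (X i j)))%:E.
    rewrite /A1 E_sum; [|exact: mS|exact: S0].
    rewrite -sumEFin; apply: eq_bigr => i hi.
    rewrite /S E_sum; [|exact: mtL|exact: tL0].
    rewrite -sumEFin; apply: eq_bigr => j _.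
    rewrite /beta ifF; last by rewrite leqNgt ltnS hi.
    exact: (E_fin P _ _ (mtL i j) (tL0 i j) (tL1 i j)).
  rewrite eA1 lee_fin.
  apply: (@le_trans _ _ (\sum_(i < m | (ell i <= 1)%N) (b + 1))).
    by apply: ler_sum => i _; exact: hB.
  rewrite (_ : \sum_(i < m | (ell i <= 1)%N) (b + 1) =
      (b + 1) *+ #|[pred i : 'I_m | (ell i <= 1)%N]|); last first.
    by rewrite -sumr_const; apply: eq_bigl => i; rewrite inE.
  have hc : (#|[pred i : 'I_m | (ell i <= 1)%N]| <= 1)%N.
    case: (posnP m) => [m0|mpos].
      by apply: leq_trans (max_card _) _; rewrite card_ord m0.
    by apply: hcard; rewrite mpos.
  rewrite -mulr_natr -[leRHS]mulr1; apply: ler_wpM2l; first by rewrite addr_ge0.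
  by rewrite lern1.
have hA3 : (expect P A3 <= 2%:E)%E.
  rewrite /A3 E_sum; [|by move=> t; apply: msumr|by move=> t x; apply: sumr_ge0].
  apply: (@le_trans _ _ ((\sum_(0 <= t < n.+1) \sum_(i < m | (2 <= ell i)%N)
      (((ell i)%:R^-1) ^+ 3 * (2^-1) ^+ t))%:E)).
    rewrite -sumEFin; apply: lee_sum => t _.
    rewrite E_sum; [|exact: mind|exact: ind0].
    rewrite -sumEFin; apply: lee_sum => i hi.
    apply: le_trans (tail_bound P m n X hX X0 hind i (fun j => a j == i) (ell i) hi (b + 1)
      (c0 + t%:R) (hB i)) _.
    rewrite lee_fin /=; apply: pw_bound; by rewrite (ler_nat R 2).
  rewrite lee_fin exchange_big /=.
  apply: (@le_trans _ _ (\sum_(i < m | (2 <= ell i)%N) ((((ell i)%:R^-1) ^+ 3) * 2))).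
    apply: ler_sum => i _; rewrite -mulr_sumr; apply: ler_wpM2l; last exact: geo_le.
    by rewrite exprn_ge0 // invr_ge0 ler0n.
  rewrite -mulr_suml -[leRHS]mul1r; apply: ler_wpM2r; first by rewrite ler0n.
  apply: abel => [i|]; first by have /andP[] := hell i.
  exact: hcard.
have hA4 : (expect P A4 <= 2%:E)%E.
  rewrite /A4 E_sum; [|exact: mH|exact: H0].
  rewrite (eq_bigr (fun i => \sum_(j < n | a j == i) expect P (truncH (X i j)))) //.
  by move=> i _; rewrite /H E_sum; [|exact: mtH|exact: tH0].
apply: (le_trans (leeD hA1 (leeD (lexx c0%:E) (leeD hA3 hA4)))).
by rewrite -!EFinD lee_fin /c0; lra.
Qed.
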